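(* Let $\mathcal{G}=(\mathcal{V},\mathcal{A})$ be the information-flow graph of a single-sender single-uniprior index-coding instance with message lengths $q_1,\dots,q_n$. Then \[ \ell^*(\mathcal{G}) = \sum_{k \in \mathcal{V}} q_k - \sum_{i \in \mathcal{L}(\mathcal{G})} q_i - \sum_{\mathcal{V}_{S} \in \mathbb{V}} \min_{a \in \mathcal{V}_{S}} q_a, \] where $\mathbb{V}$ is the set of vertex sets of all leaf SCCs of $\mathcal{G}$. Furthermore, this optimal length is achieved by a linear index code, i.e., one whose encoding function is linear over $\mathrm{GF}(2)$ (each codeword bit is an XOR of message bits).
   Context: Single-sender single-uniprior index coding: there are $n$ receivers and $n$ independent messages $x_1,\dots,x_n$; message $x_i$ consists of $q_i\ge 1$ bits, each independently uniformly distributed on $\{0,1\}$. A single sender knows all messages. Receiver $i$ knows $x_i$ a priori and requests a set $\mathcal{W}_i$ of messages with $x_i\notin\mathcal{W}_i$. The information-flow graph is the directed graph $\mathcal{G}=(\mathcal{V},\mathcal{A})$ with $\mathcal{V}=\{1,\dots,n\}$ and an arc $(j\to i)\in\mathcal{A}$ iff $x_j\in\mathcal{W}_i$. An index code of length $\ell$ consists of an encoding function $E:\{0,1\}^{\sum_i q_i}\to\{0,1\}^\ell$ and, for each receiver $i$, a decoding function $D_i$ such that $D_i(E(x_1,\dots,x_n),x_i)$ equals the tuple of messages in $\mathcal{W}_i$ for all values of the messages. $\ell^*(\mathcal{G})$ denotes the minimum length of an index code. A leaf vertex is a vertex with no outgoing arcs; $\mathcal{L}(\mathcal{G})$ is the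 set of leaf vertices. A strongly connected component (SCC) is a maximal subgraph in which every ordered pair of vertices is joined by a directed path inside the subgraph. A leaf SCC is an SCC with at least two vertices from which no arc goes to a vertex outside the SCC. *)

(* Defs.v *)
From mathcomp Require Import all_boot.
Set Implicit Arguments. Unset Strict Implicit. Unset Printing Implicit Defensive.

Section IndexCoding.
Variables (n : nat) (q : 'I_n -> nat) (W : 'I_n -> {set 'I_n}).

Definition msgs := forall i : 'I_n, {ffun 'I_(q i) -> bool}.

Definition arc : rel 'I_n := fun j i => j \in W i.

Definition is_index_code (l : nat) (E : msgs -> {ffun 'I_l -> bool}) : Prop :=
  exists D : forall i : 'I_n, {ffun 'I_l -> bool} -> {ffun 'I_(q i) -> bool} ->
               forall j : 'I_n, {ffun 'I_(q j) -> bool},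
    forall (x : msgs) (i j : 'I_n), j \in W i -> D i (E x) (x i) j = x j.

Definition is_linear_code (l : nat) (E : msgs -> {ffun 'I_l -> bool}) : Prop :=
  exists c : 'I_l -> forall j : 'I_n, 'I_(q j) -> bool,
    forall (x : msgs) (k : 'I_l),
      E x k = \big[addb/false]_(j < n) \big[addb/false]_(b < q j) (c k j b && x j b).

Definition leaf (i : 'I_n) : bool := [forall j, ~~ arc i j].

Definition strongly_connected (S : {set 'I_n}) : bool :=
  [forall u in S, forall v in S,
     connect (fun a b => [&& arc a b, a \in S & b \in S]) u v].

Definition is_SCC (S : {set 'I_n}) : bool :=
  maxset (fun T : {set 'I_n} => (T != set0) && strongly_connected T) S.

Definition leaf_SCC (S : {set 'I_n}) : bool :=
  [&& is_SCC S, 1 < #|S| &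
      [forall u in S, forall v, arc u v ==> (v \in S)]].

(* minimum of q over a (nonempty) set S; the identity element
   \max_k q k is >= every q a, so this is the true minimum when S != set0 *)
Definition minq (S : {set 'I_n}) : nat :=
  \big[minn/(\max_(k < n) q k)]_(a in S) q a.

Definition opt_length : nat :=
  \sum_(k < n) q k - \sum_(i < n | leaf i) q i
  - \sum_(S : {set 'I_n} | leaf_SCC S) minq S.

End IndexCoding.

(* Main.v *)
Require Import Defs.
From mathcomp Require Import all_boot.
From Stdlib Require Import ClassicalEpsilon.
Set Implicit Arguments. Unset Strict Implicit. Unset Printing Implicit Defensive.
Section Graph.
Variables (n : nat) (W : 'I_n -> {set 'I_n}).
Hypothesis hW : forall i, i \notin W i.
Local Notation e := (Defs.arc W).
Definition ind (S : {set 'I_n}) : rel 'I_n := fun a b => [&& e a b, a \in S & b \in S].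

Lemma ind_sub (S T : {set 'I_n}) : S \subset T -> subrel (connect (ind S)) (connect (ind T)).
Proof.
move=> ST; apply: connect_sub => a b /and3P[h ha hb]; apply: connect1.
by rewrite /ind h !(subsetP ST).
Qed.

Lemma ind_arc S : subrel (connect (ind S)) (connect e).
Proof. by apply: connect_sub => a b /and3P[h _ _]; apply: connect1. Qed.

Lemma scP S u v : strongly_connected W S -> u \in S -> v \in S -> connect (ind S) u v.
Proof. by move=> /forall_inP H hu hv; have /forall_inP := H u hu; apply. Qed.

Lemma sc_union (S T : {set 'I_n}) x : strongly_connected W S -> strongly_connected W T ->
  x \in S -> x \in T -> strongly_connected W (S :|: T).
Proof.
move=> sS sT xS xT.
have hS : subrel (connect (ind S)) (connect (ind (S :|: T))) by apply: ind_sub; apply: subsetUl.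
have hT : subrel (connect (ind T)) (connect (ind (S :|: T))) by apply: ind_sub; apply: subsetUr.
have ux : forall u, u \in S :|: T -> connect (ind (S :|: T)) u x.
  by move=> u /setUP[h|h]; [apply: hS; apply: scP | apply: hT; apply: scP].
have xu : forall u, u \in S :|: T -> connect (ind (S :|: T)) x u.
  by move=> u /setUP[h|h]; [apply: hS; apply: scP | apply: hT; apply: scP].
apply/forall_inP => u hu; apply/forall_inP => v hv.
exact: connect_trans (ux u hu) (xu v hv).
Qed.

Lemma SCC_eq (S T : {set 'I_n}) x : is_SCC W S -> is_SCC W T -> x \in S -> x \in T -> S = T.
Proof.
move=> /maxsetP[/andP[S0 sS] mS] /maxsetP[/andP[T0 sT] mT] xS xT.
have PU : (S :|: T != set0) && strongly_connected W (S :|: T).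
  apply/andP; split; last exact: sc_union xS xT.
  by apply/set0Pn; exists x; rewrite inE xS.
by rewrite -(mS _ PU (subsetUl _ _)) (mT _ PU (subsetUr _ _)).
Qed.

Lemma leafSCC_SCC S : leaf_SCC W S -> is_SCC W S.
Proof. by case/and3P. Qed.

Lemma leafSCC_closed S u v : leaf_SCC W S -> u \in S -> e u v -> v \in S.
Proof.
by case/and3P => _ _ /forall_inP H uS; have /forallP := H u uS => /(_ v) /implyP.
Qed.

Lemma leafSCC_sc S : leaf_SCC W S -> strongly_connected W S.
Proof. by case/and3P => /maxsetp/andP[]. Qed.

Lemma leafSCC_notleaf S u : leaf_SCC W S -> u \in S -> ~~ leaf W u.
Proof.
move=> hS uS; case/and3P: (hS) => _ /card_gt1P [a [b [aS bS ab]]] _.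
have [w [wS wu]] : exists w, w \in S /\ u != w.
  by case: (eqVneq u a) => [ua|]; [exists b; rewrite ua | exists a].
have /connectP[p pp lp] := scP (leafSCC_sc hS) uS wS.
case: p pp lp => [|y p] /=; first by move=> _ ew; rewrite ew eqxx in wu.
case/andP => /and3P[hy _ _] _ _.
by apply/forallPn; exists y; rewrite negbK.
Qed.

Lemma closed_ind (C : {set 'I_n}) a b :
  (forall x y, x \in C -> e x y -> y \in C) -> a \in C -> connect e a b -> connect (ind C) a b.
Proof.
move=> cl aC /connectP[p pp ->]; elim: p a aC pp => [|y p IH] a aC /=; first by rewrite connect0.
case/andP => ay pp; have yC := cl _ _ aC ay.
apply: connect_trans (IH y yC pp); apply: connect1; by rewrite /ind ay aC yC.
Qed.

Lemma reach v : exists t, connect e v t /\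
   (leaf W t \/ exists S, leaf_SCC W S /\ t \in S).
Proof.
pose R t := [set w | connect e t w].
case: (@arg_minnP _ v (fun t => connect e v t) (fun t => #|R t|) (connect0 _ _))
   => t vt tmin.
exists t; split => //.
case lt: (leaf W t); [by left | right].
have key : forall u, u \in R t -> t \in R u.
  move=> u; rewrite inE => tu.
  have sub : R u \subset R t by apply/subsetP => w; rewrite !inE; apply: connect_trans.
  have le : #|R t| <= #|R u| by apply: tmin; apply: connect_trans vt tu.
  have /eqP E : R u == R t by rewrite eqEcard sub le.
  by rewrite E inE connect0.
have cl : forall x y, x \in R t -> e x y -> y \in R t.
  by move=> x y; rewrite !inE => tx xy; apply: connect_trans tx (connect1 xy).
have sc : strongly_connected W (R t).
  apply/forall_inP => u hu; apply/forall_inP => w hw.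
  apply: closed_ind => //; have := key u hu; rewrite inE => ut.
  by move: hw; rewrite inE; apply: connect_trans.
exists (R t); split; last by rewrite inE connect0.
apply/and3P; split.
- apply/maxsetP; split.
    by rewrite sc andbT; apply/set0Pn; exists t; rewrite inE connect0.
  move=> B /andP[_ sB] sub; apply/eqP; rewrite eqEsubset sub andbT.
  apply/subsetP => b bB; have tB : t \in B by apply: (subsetP sub); rewrite inE connect0.
  by rewrite inE; apply: (ind_arc (scP sB tB bB)).
- move/negbT: lt => /forallPn[j]; rewrite negbK => tj.
  apply/card_gt1P; exists t, j; split; rewrite ?inE ?connect0 ?(connect1 tj) //.
  by apply/eqP => tj'; move: tj; rewrite -tj' /Defs.arc (negbTE (hW t)).
- apply/forall_inP => u uR; apply/forallP => w; apply/implyP; exact: cl.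
Qed.

End Graph.
Lemma big_sigma (R : Type) (idx : R) (op : Monoid.com_law idx) (n : nat) (q : 'I_n -> nat)
  (G : {i : 'I_n & 'I_(q i)} -> R) :
  \big[op/idx]_(j < n) \big[op/idx]_(b < q j) G (Tagged (fun v => 'I_(q v)) b)
  = \big[op/idx]_(p : {i : 'I_n & 'I_(q i)}) G p.
Proof.
rewrite (partition_big (fun p : {i : 'I_n & 'I_(q i)} => tag p) predT) //=.
apply: eq_bigr => j _.
rewrite (big_tag (fun i (b : 'I_(q i)) => G (Tagged (fun v => 'I_(q v)) b)) j).
apply: eq_bigr => p /eqP e; by rewrite (untagE _ _ e) etaggedK.
Qed.

Section Main.
Variables (n : nat) (q : 'I_n -> nat) (W : 'I_n -> {set 'I_n}).
Hypothesis hW : forall i, i \notin W i.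
Variable d : 'I_n.
Local Notation e := (Defs.arc W).

Lemma minq_le (S : {set 'I_n}) a : a \in S -> minq q S <= q a.
Proof.
move=> aS; rewrite /minq; set M := \max_(k < n) q k; have : a \in index_enum 'I_n by rewrite mem_index_enum.
elim: (index_enum 'I_n) => [|b r IH] //=; rewrite inE big_cons.
case/orP => [/eqP <-|ar]; first by rewrite aS geq_minl.
by case: ifP => _; [apply: leq_trans (geq_minr _ _) (IH ar) | apply: IH].
Qed.
Lemma minq_att (S : {set 'I_n}) : S != set0 -> exists2 a, a \in S & q a = minq q S.
Proof.
case/set0Pn => a0 a0S.
have : minq q S = \max_(k < n) q k \/ exists2 a, a \in S & minq q S = q a.
  rewrite /minq; apply: (big_ind (fun y => y = \max_(k < n) q k \/ exists2 a, a \in S & y = q a)).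
  - by left.
  - move=> x y Hx Hy; rewrite /minn; case: ifP => _; [exact: Hx|exact: Hy].
  - by move=> a aS; right; exists a.
case=> [Em|[a aS ->]]; last by exists a.
exists a0 => //; apply/eqP; rewrite eqn_leq minq_le // andbT Em.
exact: (leq_bigmax a0).
Qed.

Definition rep (S : {set 'I_n}) : 'I_n := odflt d [pick a in S | q a == minq q S].

Lemma rep_spec S : S != set0 -> rep S \in S /\ q (rep S) = minq q S.
Proof.
move=> S0; rewrite /rep; case: pickP => [a /andP[aS /eqP ->]|none] //=.
by case: (minq_att S0) => a aS qa; move: (none a); rewrite aS qa eqxx.
Qed.

Lemma leafSCC_ne S : leaf_SCC W S -> S != set0.
Proof. by case/and3P => _ h _; rewrite -card_gt0 (ltn_trans _ h). Qed.

Definition LS := [set S : {set 'I_n} | leaf_SCC W S].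
Definition A := rep @: LS.
Definition L := [set v | leaf W v].
Definition F := ~: (L :|: A).

Lemma rep_inj : {in LS &, injective rep}.
Proof.
move=> S T; rewrite !inE => hS hT eST.
have [rS _] := rep_spec (leafSCC_ne hS); have [rT _] := rep_spec (leafSCC_ne hT).
by apply: (SCC_eq (leafSCC_SCC hS) (leafSCC_SCC hT) rS); rewrite eST.
Qed.

Lemma inA v : v \in A -> exists2 S, leaf_SCC W S & v = rep S /\ v \in S.
Proof.
case/imsetP => S; rewrite inE => hS ->; exists S => //; split => //.
by case: (rep_spec (leafSCC_ne hS)).
Qed.

Lemma AnotL v : v \in A -> v \notin L.
Proof. by case/inA => S hS [-> rS]; rewrite inE; apply: leafSCC_notleaf hS rS. Qed.

Lemma inF v : (v \in F) = (v \notin L) && (v \notin A).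
Proof. by rewrite /F in_setC in_setU negb_or. Qed.

Lemma repA S : leaf_SCC W S -> rep S \in A.
Proof. by move=> hS; apply: imset_f; rewrite inE. Qed.

Lemma sum_id : opt_length q W = \sum_(v in F) q v.
Proof.
rewrite /opt_length.
have -> : \sum_(S : {set 'I_n} | leaf_SCC W S) minq q S = \sum_(a in A) q a.
  rewrite big_imset; last exact: rep_inj.
  apply: eq_big => S; first by rewrite inE.
  by move=> hS; case: (rep_spec (leafSCC_ne hS)).
have -> : \sum_(i < n | leaf W i) q i = \sum_(i in L) q i by apply: eq_bigl => i; rewrite inE.
rewrite (bigID (mem L)) /= (bigID (mem A) (fun i => i \notin L)) /=.
have -> : \sum_(i | (i \notin L) && (i \in A)) q i = \sum_(i in A) q i.
  apply: eq_bigl => i; case iA: (i \in A); rewrite ?andbF ?andbT //.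
  by rewrite AnotL.
have -> : \sum_(i | (i \notin L) && (i \notin A)) q i = \sum_(i in F) q i.
  by apply: eq_bigl => i; rewrite !inE negb_or.
by rewrite addKn addKn.
Qed.

Definition T := {i : 'I_n & 'I_(q i)}.
Definition Fset := [set p : T | tag p \in F].

Lemma card_Fset : #|Fset| = \sum_(v in F) q v.
Proof.
rewrite -sum1_card big_mkcond /=.
rewrite -(@big_sigma _ _ addn _ q (fun p : T => if p \in Fset then 1 else 0)).
rewrite [RHS]big_mkcond /=; apply: eq_bigr => j _.
transitivity (\sum_(b < q j) (if j \in F then 1 else 0)).
  by apply: eq_bigr => b _; rewrite inE.
by case: (j \in F); [rewrite sum1_card card_ord | rewrite big1].
Qed.

Lemma eN : opt_length q W = #|Fset|.
Proof. by rewrite sum_id card_Fset. Qed.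


Lemma lower l (E : msgs q -> {ffun 'I_l -> bool}) :
  is_index_code W E -> opt_length q W <= l.
Proof.
case=> D hD.
pose emb (z : {ffun T -> bool}) : msgs q :=
  fun v => [ffun b => z (Tagged (fun v => 'I_(q v)) b)].
pose f z := E (emb z).
have inj : {in pffun_on false Fset predT &, injective f}.
  move=> z z' /pffun_onP[sz _] /pffun_onP[sz' _] Ef.
  have zoff : forall (y : {ffun T -> bool}), false.-support y \subset Fset ->
      forall p, p \notin Fset -> y p = false.
    move=> y sy p pF; apply/negbTE; apply: contra pF => yp; apply: (subsetP sy); by rewrite inE yp.
  have off v : v \notin F -> emb z v = emb z' v.
    move=> vF; apply/ffunP => b; rewrite !ffunE.
    have pF : Tagged (fun v => 'I_(q v)) b \notin Fset by rewrite inE.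
    by rewrite (zoff _ sz _ pF) (zoff _ sz' _ pF).
  have back a b : e a b -> emb z b = emb z' b -> emb z a = emb z' a.
    move=> ab eb; transitivity (D b (E (emb z)) (emb z b) a); first by rewrite hD.
    by rewrite [E (emb z)]Ef eb; exact: hD.
  have pth v t : connect e v t -> emb z t = emb z' t -> emb z v = emb z' v.
    case/connectP => p pp ->; elim: p v pp => [|y p IH] v //= /andP[vy pp] h.
    by apply: back vy (IH _ pp h).
  have all v : emb z v = emb z' v.
    case: (reach hW v) => t [vt [lt | [S [hS tS]]]].
      by apply: pth vt _; apply: off; rewrite inF inE lt.
    have [rS _] := rep_spec (leafSCC_ne hS).
    have tr := ind_arc (scP (leafSCC_sc hS) tS rS).
    apply: pth (connect_trans vt tr) _; apply: off.
    by rewrite inF repA // andbF.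
  apply/ffunP => -[v b]; have := congr1 (fun g : {ffun 'I_(q v) -> bool} => g b) (all v).
  by rewrite !ffunE.
have c1 := card_in_imset inj.
have c2 : #|f @: pffun_on false Fset predT| <= #|{ffun 'I_l -> bool}| by apply: max_card.
move: c2; rewrite c1 card_pffun_on card_ffun card_ord card_bool => c2.
by rewrite eN -(leq_exp2l _ _ (isT : 1 < 2)).
Qed.


Definition sccOf v := [pick S | leaf_SCC W S && (v \in S)].

Lemma sccOfP v S : sccOf v = Some S -> leaf_SCC W S /\ v \in S.
Proof. by rewrite /sccOf; case: pickP => // S' /andP[h1 h2] [<-]. Qed.

Lemma sccOf_none v : sccOf v = None -> forall S, leaf_SCC W S -> v \notin S.
Proof.
rewrite /sccOf; case: pickP => // none _ S hS; apply/negP => vS.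
by move: (none S); rewrite hS vS.
Qed.

Lemma sccOf_some v S : leaf_SCC W S -> v \in S -> sccOf v = Some S.
Proof.
move=> hS vS; rewrite /sccOf; case: pickP => [S' /andP[hS' vS']|none].
  by congr Some; apply: SCC_eq (leafSCC_SCC hS') (leafSCC_SCC hS) vS' vS.
by move: (none S); rewrite hS vS.
Qed.

Definition p1 (p : T) : option T :=
  if sccOf (tag p) is Some C then
    omap (fun b : 'I_(q (rep C)) => Tagged (fun v => 'I_(q v)) b) (insub (val (tagged p)))
  else None.

Definition pk (k : 'I_(opt_length q W)) : T := enum_val (cast_ord eN k).

Definition bit (x : msgs q) (p : T) := x (tag p) (tagged p).
Definition obit (x : msgs q) (o : option T) := if o is Some p then bit x p else false.

Definition cc (k : 'I_(opt_length q W)) (j : 'I_n) (b : 'I_(q j)) : bool :=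
  (Tagged (fun v => 'I_(q v)) b == pk k) || (Some (Tagged (fun v => 'I_(q v)) b) == p1 (pk k)).

Definition Ecode (x : msgs q) : {ffun 'I_(opt_length q W) -> bool} :=
  [ffun k => \big[addb/false]_(j < n) \big[addb/false]_(b < q j) (cc k b && x j b)].

Lemma sum_two (y : T -> bool) p0 o : o != Some p0 ->
  \big[addb/false]_(p : T) (((p == p0) || (Some p == o)) && y p)
  = y p0 (+) (if o is Some p then y p else false).
Proof.
move=> ho; rewrite (bigD1 p0) //= eqxx /=; case: o ho => [p'|] ho.
  have hp : p' != p0 by apply: contraNneq ho => ->.
  rewrite (bigD1 p') //= eqxx orbT /= big1 ?addbF // => p /andP[pp0 pp'].
  by rewrite (negbTE pp0) /= (inj_eq (@Some_inj _)) (negbTE pp').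
by rewrite big1 ?addbF // => p pp0; rewrite (negbTE pp0).
Qed.

Lemma Ecode_eval x k : p1 (pk k) != Some (pk k) ->
  Ecode x k = bit x (pk k) (+) obit x (p1 (pk k)).
Proof.
move=> h; rewrite ffunE.
transitivity (\big[addb/false]_(p : T) (((p == pk k) || (Some p == p1 (pk k))) && bit x p)).
  by rewrite -(@big_sigma _ _ addb _ q).
by rewrite sum_two //; case: (p1 (pk k)).
Qed.

Lemma p1_neq p : p \in Fset -> p1 p != Some p.
Proof.
move=> pF; rewrite /p1; case E: (sccOf (tag p)) => [S|] //.
have [hS _] := sccOfP E.
case: insubP => [u _ _ | _] //=; apply/eqP => -[h].
by move: pF; rewrite -h inE inF /= repA // andbF.
Qed.

Lemma pk_surj p : p \in Fset -> exists k, pk k = p.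
Proof.
move=> pF; exists (cast_ord (esym eN) (enum_rank_in pF p)).
by rewrite /pk cast_ordKV enum_rankK_in.
Qed.

Lemma rel x x' p : p \in Fset -> Ecode x = Ecode x' ->
  bit x p (+) obit x (p1 p) = bit x' p (+) obit x' (p1 p).
Proof.
move=> pF Ex; case: (pk_surj pF) => k <-.
have pkF : pk k \in Fset by rewrite /pk; apply: enum_valP.
by rewrite -!Ecode_eval ?p1_neq // Ex.
Qed.

Lemma decode x x' i j : j \in W i -> Ecode x = Ecode x' -> x i = x' i -> x j = x' j.
Proof.
move=> ji Ex xi.
have jL : j \notin L.
  by rewrite inE; apply/negP => /forallP /(_ i); rewrite /Defs.arc ji.
case Ej: (sccOf j) => [S|].
- have [hS jS] := sccOfP Ej.
  have iS : i \in S by apply: leafSCC_closed hS jS ji.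
  have [aS qa] := rep_spec (leafSCC_ne hS).
  have notA v : v \in S -> v != rep S -> v \notin A.
    move=> vS va; apply/negP => /inA [S' hS' [vr vS']].
    have eSS := SCC_eq (leafSCC_SCC hS) (leafSCC_SCC hS') vS vS'.
    by move: va; rewrite vr -eSS eqxx.
  have inFS v : v \in S -> v != rep S -> forall b : 'I_(q v),
      Tagged (fun v => 'I_(q v)) b \in Fset.
    move=> vS va b; rewrite inE inF /= notA // andbT inE.
    exact: leafSCC_notleaf hS vS.
  have xa : x (rep S) = x' (rep S).
    case: (eqVneq i (rep S)) => [<- // | ia].
    apply/ffunP => b; have le : q (rep S) <= q i by rewrite qa minq_le.
    have := rel (inFS i iS ia (widen_ord le b)) Ex.
    rewrite /p1 /= (sccOf_some hS iS).
    case: insubP => [u _ eu|]; last by rewrite /= ltn_ord.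
    have -> : u = b by apply: val_inj; rewrite eu.
    rewrite /obit /bit /= xi.
    by case: (x' i _); case: (x (rep S) b); case: (x' (rep S) b).
  case: (eqVneq j (rep S)) => [-> // | ja].
  apply/ffunP => b; have := rel (inFS j jS ja b) Ex.
  rewrite /p1 /= Ej.
  case: insubP => [u _ _|_] /=; rewrite /obit /bit /= ?xa ?addbF //.
  by case: (x j b); case: (x' j b); case: (x' (rep S) u).
- have jA : j \notin A.
    apply/negP => /inA [S hS [_ jS]].
    by move: (sccOf_none Ej hS); rewrite jS.
  apply/ffunP => b.
  have jF : Tagged (fun v => 'I_(q v)) b \in Fset by rewrite inE inF /= jL jA.
  have := rel jF Ex; rewrite /p1 /= Ej /obit /bit /= !addbF.
  done.
Qed.

End Main.
Lemma det_code n (q : 'I_n -> nat) (W : 'I_n -> {set 'I_n}) l (E : msgs q -> {ffun 'I_l -> bool}) :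
  (forall x x' i j, j \in W i -> E x = E x' -> x i = x' i -> x j = x' j) -> is_index_code W E.
Proof.
move=> H.
have inh : inhabited (msgs q) by constructor; exact: (fun v => [ffun _ => false]).
exists (fun i c y j => (epsilon inh (fun x => E x = c /\ x i = y)) j).
move=> x i j ji.
have [h1 h2] := epsilon_spec inh (fun x' => E x' = E x /\ x' i = x i) (ex_intro _ x (conj erefl erefl)).
exact: H h1 h2.
Qed.
Theorem theorem3 (n : nat) (q : 'I_n -> nat) (W : 'I_n -> {set 'I_n}) :
  (forall i, 0 < q i) ->
  (forall i, i \notin W i) ->
  (exists E : msgs q -> {ffun 'I_(opt_length q W) -> bool},
      is_index_code W E /\ is_linear_code E) /\
  (forall (l : nat) (E : msgs q -> {ffun 'I_l -> bool}),
      is_index_code W E -> opt_length q W <= l).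
Proof.
case: n q W => [|n] q W hq hW.
  split.
    exists (fun _ => [ffun k => false]); split.
      by exists (fun i _ _ j => [ffun b => false]) => x [i hi].
    by exists (fun _ _ _ => false) => x k; rewrite ffunE big_ord0.
  by move=> l E _; rewrite /opt_length big_ord0.
split; last by move=> l E; apply: (lower hW ord0).
exists (Ecode W ord0); split.
  by apply: det_code => x x' i j; apply: decode.
by exists (cc (q:=q) (W:=W) ord0) => x k; rewrite ffunE.
Qed.
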